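(* Let $q$ be odd, $\alpha,\beta\in\mathbb{F}_{q^2}$ with $\alpha\ne0$ and $(\beta^q-\beta)^2+4\alpha^{q+1}$ a nonsquare in $\mathbb{F}_q$, and let $R_1=(0,\epsilon,1)$, $U_\infty=(1,0,0)$. If $\ell$ is a line of $\mathrm{PG}(2,q^2)$ not through $U_\infty$, then $|\ell\cap\mathrm{pedal}(R_1)|\in\{0,1,2\}$.
   Context: Points of $\mathrm{PG}(2,q^2)$ have homogeneous coordinates $(x,y,z)$. $\zeta$ is a primitive element of $\mathbb{F}_{q^2}$ and $\epsilon=\zeta^{(q+1)/2}$. $\mathcal U_{\alpha\beta}=\{(x,\alpha x^2+\beta x^{q+1}+r,1): x\in\mathbb{F}_{q^2}, r\in\mathbb{F}_q\}\cup\{(0,1,0)\}$, which under the hypotheses is a unital (a set of $q^3+1$ points meeting every line in $1$ or $q+1$ points), and $R_1\notin\mathcal U_{\alpha\beta}$. For a point $P$ not on the unital, $\mathrm{pedal}(P)$ is the set of points of contact of the $q+1$ tangent lines (lines meeting the unital in exactly one point) through $P$. *)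

(* Defs.v *)
From HB Require Import structures.
From mathcomp Require Import all_boot all_order all_algebra all_field.
Set Implicit Arguments. Unset Strict Implicit. Unset Printing Implicit Defensive.
Import GRing.Theory.
Local Open Scope ring_scope.

Definition vec (F : finFieldType) := (F * F * F)%type.

Definition dot (F : finFieldType) (u v : vec F) : F :=
  u.1.1 * v.1.1 + u.1.2 * v.1.2 + u.2 * v.2.

Definition pt (F : finFieldType) (v : vec F) : {set vec F} :=
  [set (k * v.1.1, k * v.1.2, k * v.2) | k in [set k : F | k != 0]].

(* P is a point of PG(2,F) (resp. a line, in dual coordinates). *)
Definition isPoint (F : finFieldType) (P : {set vec F}) : bool :=
  [exists v : vec F, (v != ((0, 0, 0) : vec F)) && (P == pt v)].

Definition incident (F : finFieldType) (P L : {set vec F}) : bool :=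
  [forall v in P, forall w in L, dot w v == 0].

(* The set U_{alpha beta} (q is such that F_q is the subfield {r | r^q = r}). *)
Definition unital (F : finFieldType) (q : nat) (alpha beta : F) : {set {set vec F}} :=
  pt ((0, 1, 0) : vec F) |:
  [set pt (x, alpha * x ^+ 2 + beta * x ^+ q.+1 + r, 1) | x in [set: F],
       r in [set r : F | r ^+ q == r]].

(* Q is a point of contact of a tangent line through P: Q lies on U and some line
   through P and Q meets U exactly in Q. *)
Definition pedal (F : finFieldType) (q : nat) (alpha beta : F) (P : {set vec F})
  : {set {set vec F}} :=
  [set Q in unital q alpha beta |
     [exists L : {set vec F}, [&& isPoint L, incident P L, incident Q L &
        [set R in unital q alpha beta | incident R L] == [set Q]]]].

(* Main.v *)
Require Import Defs.
From HB Require Import structures.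
From mathcomp Require Import all_boot all_order all_algebra all_field.
From mathcomp Require fingroup pgroup abelian.
From mathcomp Require Import ring zify.
Import GRing.Theory.
Local Open Scope ring_scope.
Set Implicit Arguments. Unset Strict Implicit.

Lemma cjD (q : nat) (F : finFieldType) (hF : #|F| = (q ^ 2)%N) (x y : F) :
  (x + y) ^+ q = x ^+ q + y ^+ q.
Proof.
have [p pr_p chp] := finPcharP F.
apply: exprDn_pchar.
have ab := abelian.fin_ring_pchar_abelem chp.
have pg := abelian.abelem_pgroup ab.
have pn : p.-nat #|F|.
  by move: pg; rewrite /pgroup.pgroup cardsT.
have : p.-nat q.
  apply: pnat_dvd pn; rewrite hF; exact: dvdn_mulr.
by rewrite (eq_pnat _ (pcharf_eq chp)).
Qed.

Lemma cjK (q : nat) (F : finFieldType) (hF : #|F| = (q ^ 2)%N) (x : F) :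
  (x ^+ q) ^+ q = x.
Proof. by rewrite -exprM -[(q * q)%N]/(q ^ 2)%N -hF expf_card. Qed.

Lemma cjN (q : nat) (F : finFieldType) (hF : #|F| = (q ^ 2)%N) (hq : odd q) (x : F) :
  (- x) ^+ q = - x ^+ q.
Proof.
apply/eqP; rewrite -subr_eq0 opprK -cjD // addNr expr0n.
by case: q hF hq.
Qed.

Lemma cjB (q : nat) (F : finFieldType) (hF : #|F| = (q ^ 2)%N) (hq : odd q) (x y : F) :
  (x - y) ^+ q = x ^+ q - y ^+ q.
Proof. by rewrite cjD // cjN. Qed.

Lemma cjV (q : nat) (F : finFieldType) (x : F) : (x^-1) ^+ q = (x ^+ q)^-1.
Proof. by rewrite exprVn. Qed.

Lemma cj1 (q : nat) (F : finFieldType) : (1 : F) ^+ q = 1.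
Proof. by rewrite expr1n. Qed.

Lemma cj2 (q : nat) (F : finFieldType) (hF : #|F| = (q ^ 2)%N) : (2 : F) ^+ q = 2.
Proof. by rewrite cjD // expr1n. Qed.

Lemma aniso (q : nat) (F : finFieldType) (hF : #|F| = (q ^ 2)%N) (hq : odd q)
  (alpha beta : F)
  (hnsq : ~ (exists y : F, y ^+ q = y /\
            y ^+ 2 = (beta ^+ q - beta) ^+ 2 + 4 * alpha ^+ q.+1))
  (u : F) : u != 0 ->
  alpha * u * u - alpha ^+ q * (u ^+ q * u ^+ q) + (beta - beta ^+ q) * u * u ^+ q != 0.
Proof.
move=> u0; apply/negP => /eqP h.
have uq0 : u ^+ q != 0 by rewrite expf_neq0.
apply: hnsq; exists ((alpha * u * u + alpha ^+ q * (u ^+ q * u ^+ q)) / (u * u ^+ q)); split.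
- rewrite exprMn cjV !cjD // !exprMn !cjK //.
  field; by rewrite uq0 u0.
- have hd : beta - beta ^+ q = (alpha ^+ q * (u ^+ q * u ^+ q) - alpha * u * u) / (u * u ^+ q).
    apply/(@mulIf _ (u * u ^+ q)); first by rewrite mulf_neq0.
    rewrite mulfVK ?mulf_neq0 //.
    by apply/eqP; rewrite -subr_eq0; apply/eqP; rewrite -h; ring.
  rewrite (exprS alpha).
  have -> : (beta ^+ q - beta) ^+ 2 = (beta - beta ^+ q) ^+ 2 by ring.
  rewrite hd; field; by rewrite uq0 u0.
Qed.
Lemma pt_mem (F : finFieldType) (v : vec F) : v \in pt v.
Proof.
case: v => [[a b] c]; apply/imsetP; exists 1; first by rewrite inE oner_neq0.
by rewrite /= !mul1r.
Qed.

Lemma incidentE (F : finFieldType) (v w : vec F) :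
  incident (pt v) (pt w) = (dot w v == 0).
Proof.
rewrite /incident; apply/idP/idP.
  move=> /forallP H; move: (H v); rewrite pt_mem /= => /forallP H2.
  by move: (H2 w); rewrite pt_mem.
move=> /eqP h; apply/forallP => v'; apply/implyP => /imsetP [k _ ->].
apply/forallP => w'; apply/implyP => /imsetP [l _ ->].
move: h; case: v => [[a b] c]; case: w => [[d e] f]; rewrite /dot /= => h.
apply/eqP; transitivity (l * k * (d * a + e * b + f * c)); first ring.
by rewrite h mulr0.
Qed.

Lemma pt_inj1 (F : finFieldType) (x y x' y' : F) :
  pt (x, y, 1) = pt (x', y', 1) -> x = x' /\ y = y'.
Proof.
move=> e; have := pt_mem (x, y, 1); rewrite e => /imsetP [k _ [-> -> hk]].
by move: hk; rewrite mulr1 => <-; rewrite !mul1r.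
Qed.

Lemma pt_neq_inf (F : finFieldType) (x y : F) : pt (x, y, 1) != pt (0, 1, 0).
Proof.
apply/negP => /eqP e; have := pt_mem (x, y, 1); rewrite e => /imsetP [k _ [_ _]].
by rewrite mulr0 => /eqP; rewrite oner_eq0.
Qed.

Lemma isPointP (F : finFieldType) (L : {set vec F}) :
  isPoint L -> exists a b c : F, ((a, b, c) != ((0, 0, 0) : vec F)) /\ L = pt (a, b, c).
Proof.
move=> /existsP [[[a b] c] /andP [h /eqP ->]]; by exists a, b, c.
Qed.

Lemma unital_inf (F : finFieldType) q (alpha beta : F) :
  pt (0, 1, 0) \in unital q alpha beta.
Proof. by rewrite /unital setU11. Qed.

Lemma unital_aff (F : finFieldType) q (alpha beta x r : F) : r ^+ q = r ->
  pt (x, alpha * x ^+ 2 + beta * x ^+ q.+1 + r, 1) \in unital q alpha beta.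
Proof.
move=> hr; rewrite /unital; apply/setU1P; right.
apply/imset2P; exists x r => //; by rewrite inE hr.
Qed.

Lemma unitalP (F : finFieldType) q (alpha beta : F) P : P \in unital q alpha beta ->
  P = pt (0, 1, 0) \/ exists x r, r ^+ q = r /\ P = pt (x, alpha * x ^+ 2 + beta * x ^+ q.+1 + r, 1).
Proof.
rewrite /unital => /setU1P [->|]; first by left.
move=> /imset2P [x r _]; rewrite inE => /eqP hr ->; right; by exists x, r.
Qed.
Lemma tangent_core (F : fieldType) (A Ac B Bc E M Mc X Xc S U Uc : F) :
  M*X + E - A*(X*X) - B*(X*Xc) = Mc*Xc - E - Ac*(Xc*Xc) - Bc*(Xc*X) ->
  U*(2*A*X + (B - Bc)*Xc - M) = E ->
  Uc*(2*Ac*Xc + (Bc - B)*X - Mc) = -E ->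
  S*(A*U*U - Ac*(Uc*Uc) + (B - Bc)*U*Uc) = -(2*E) ->
  M*(X+S*U) + E - A*((X+S*U)*(X+S*U)) - B*((X+S*U)*(Xc+S*Uc)) =
  Mc*(Xc+S*Uc) - E - Ac*((Xc+S*Uc)*(Xc+S*Uc)) - Bc*((Xc+S*Uc)*(X+S*U)).
Proof.
move=> h0 h1 h2 h3.
apply/eqP; rewrite -subr_eq0; apply/eqP.
transitivity ((M*X + E - A*(X*X) - B*(X*Xc)) - (Mc*Xc - E - Ac*(Xc*Xc) - Bc*(Xc*X))
   - S*(U*(2*A*X + (B - Bc)*Xc - M) - E) + S*(Uc*(2*Ac*Xc + (Bc - B)*X - Mc) + E)
   - S*(S*(A*U*U - Ac*(Uc*Uc) + (B - Bc)*U*Uc) + 2*E)); first ring.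
by rewrite h0 h1 h2 h3; ring.
Qed.

Lemma E_core (F : fieldType) (A Ac B Bc E M Mc X Xc : F) :
  M*X + E - A*(X*X) - B*(X*Xc) = Mc*Xc - E - Ac*(Xc*Xc) - Bc*(Xc*X) ->
  M = 2*A*X + (B - Bc)*Xc -> Mc = 2*Ac*Xc + (Bc - B)*X ->
  A*X*X - Ac*(Xc*Xc) + (B - Bc)*X*Xc + 2*E = 0.
Proof.
move=> h0 hM hMc; move/eqP: h0; rewrite -subr_eq0 hM hMc => /eqP <-; ring.
Qed.
Lemma eps_props (q : nat) (F : finFieldType) (hF : #|F| = (q ^ 2)%N) (hq : odd q)
  (zeta : F) (hzeta : (q ^ 2).-1.-primitive_root zeta) :
  let eps := zeta ^+ (q.+1)./2 in
  [/\ eps ^+ q = - eps, eps != 0 & (2 : F) != 0].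
Proof.
move=> eps.
have q1 : (1 < q)%N.
  case: q hF hq {hzeta eps} => [|[|q']] //= hF _.
  by have := finNzRing_gt1 F; rewrite hF.
have [k hk] : exists k, q = k.*2.+1.
  by exists q./2; rewrite -[in LHS](odd_double_half q) hq.
have k1 : (0 < k)%N by move: q1; rewrite hk; lia.
set n := (q ^ 2).-1 in hzeta.
have hn : n = (4 * (k * k.+1))%N by rewrite /n hk; lia.
set h := zeta ^+ (2 * (k * k.+1)).
have h2 : h ^+ 2 = 1.
  by rewrite /h -exprM -(prim_expr_order hzeta) hn; congr (_ ^+ _); lia.
have h1 : h != 1.
  rewrite /h -(prim_order_dvd hzeta) hn.
  apply/negP => /dvdn_leq; lia.
have hm1 : h = -1.
  by move/eqP: h2; rewrite sqrf_eq1 (negbTE h1) /= => /eqP.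
have ez : zeta != 0.
  apply/negP => /eqP z0; move: (prim_expr_order hzeta); rewrite z0 expr0n.
  rewrite hn; have -> : (4 * (k * k.+1) == 0)%N = false by lia.
  by move=> /eqP; rewrite eq_sym oner_eq0.
have he : (q.+1)./2 = k.+1.
  rewrite hk; lia.
split.
- rewrite /eps he -exprM.
  have -> : (k.+1 * q)%N = (2 * (k * k.+1) + k.+1)%N by rewrite hk; lia.
  by rewrite exprD -/h hm1 mulN1r.
- by rewrite /eps expf_neq0.
- apply/negP => /eqP t0; move: h1; rewrite hm1.
  have e2 : (-1 : F) - 1 = - 2 by ring.
  have -> : (-1 : F) = 1 by apply/eqP; rewrite -subr_eq0 e2 t0 oppr0.
  by rewrite eqxx.
Qed.

Lemma ring_trick (F : comPzRingType) (a b c d : F) : c = d -> a - b = c - d -> a = b.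
Proof. by move=> -> h; apply/eqP; rewrite -subr_eq0 h subrr. Qed.

Ltac push hF hq he :=
  do 5 rewrite ?(cjN hF hq) ?exprMn ?(cj2 hF) ?(cjD hF) ?cjV ?(cjK hF) ?expr1n ?he.
Lemma pedal_form (q : nat) (F : finFieldType) (hF : #|F| = (q ^ 2)%N) (hq : odd q)
  (alpha beta eps : F)
  (hnsq : ~ (exists y : F, y ^+ q = y /\
            y ^+ 2 = (beta ^+ q - beta) ^+ 2 + 4 * alpha ^+ q.+1))
  (he : eps ^+ q = - eps) (e0 : eps != 0) (t0 : (2 : F) != 0) P :
  P \in pedal q alpha beta (pt ((0, eps, 1) : vec F)) ->
  exists x, P = pt (x, (2 * alpha * x + (beta - beta ^+ q) * x ^+ q) * x + eps, 1) /\
    alpha * x * x - alpha ^+ q * (x ^+ q * x ^+ q) + (beta - beta ^+ q) * x * x ^+ q + 2 * eps = 0.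
Proof.
rewrite inE => /andP [PU /existsP [L /and4P [hL hR hP /eqP hS]]].
have uniq R : R \in unital q alpha beta -> incident R L -> R = P.
  move=> RU RL; apply/set1P; rewrite -hS inE RU RL //.
have [w1 [w2 [w3 [w0 eL]]]] := isPointP hL.
subst L.
move: hR; rewrite incidentE /dot /= mulr0 add0r mulr1 => /eqP hR.
have hw3 : w3 = - (w2 * eps) by apply/eqP; rewrite -addr_eq0 addrC hR.
have u00 : pt ((0, 0, 1) : vec F) \in unital q alpha beta.
  have E00 : (alpha * 0 ^+ 2 + beta * 0 ^+ q.+1 + 0 : F) = 0 by rewrite !expr0n /= !mulr0 !addr0.
  by rewrite -[X in pt (_, X, _)]E00; apply: unital_aff; rewrite expr0n; case: (q) hq.
case: (unitalP PU) => [EP | [x0 [r0 [hr0 EP]]]].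
  subst P; move: hP; rewrite incidentE /dot /= !mulr0 mulr1 add0r addr0 => /eqP w20.
  have w30 : w3 = 0 by rewrite hw3 w20 mul0r oppr0.
  have e : pt ((0, 0, 1) : vec F) = pt (0, 1, 0).
    by apply: uniq u00 _; rewrite incidentE /dot /= w30; apply/eqP; ring.
  by have := pt_neq_inf (0 : F) 0; rewrite e eqxx.
subst P; move: hP; rewrite incidentE /dot /= mulr1 => /eqP hP.
set y0 := alpha * x0 ^+ 2 + beta * x0 ^+ q.+1 + r0 in hP *.
have [w20 | w2n0] := eqVneq w2 0.
  have w30 : w3 = 0 by rewrite hw3 w20 mul0r oppr0.
  have w1n0 : w1 != 0 by move: w0; rewrite w20 w30; apply: contraNneq => ->.
  have x00 : x0 = 0.
    by move: hP; rewrite w20 w30 mul0r !addr0 => /eqP; rewrite mulf_eq0 (negbTE w1n0) => /eqP.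
  have e : pt ((0, 1, 0) : vec F) = pt (x0, y0, 1).
    by apply: uniq (unital_inf q alpha beta) _; rewrite incidentE /dot /= w20 w30; apply/eqP; ring.
  by have := pt_neq_inf x0 y0; rewrite -e eqxx.
move Hm : (- w1 / w2) => m.
have hy0 : y0 = m * x0 + eps.
  have h1 : w2 * y0 = - w1 * x0 + w2 * eps.
    apply: (ring_trick hP); rewrite hw3; ring.
  apply: (mulfI w2n0); rewrite h1 -Hm; field; by rewrite w2n0.
have h0 : m*x0 + eps - alpha*(x0*x0) - beta*(x0*x0^+q) =
          m^+q*x0^+q - eps - alpha^+q*(x0^+q*x0^+q) - beta^+q*(x0^+q*x0).
  have r0E : r0 = m*x0 + eps - alpha*(x0*x0) - beta*(x0*x0^+q).
    rewrite -hy0 /y0 expr2 exprS; ring.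
  rewrite -r0E -{1}hr0 r0E; push hF hq he; ring.
have [D0 | Dn0] := eqVneq (2*alpha*x0 + (beta - beta^+q)*x0^+q - m) 0.
  have hM : m = 2*alpha*x0 + (beta - beta^+q)*x0^+q.
    by apply/eqP; rewrite eq_sym -subr_eq0 D0.
  have hMc : m^+q = 2*alpha^+q*x0^+q + (beta^+q - beta)*x0.
    rewrite hM; push hF hq he; ring.
  exists x0; split; first by rewrite hy0 hM.
  exact: (E_core h0 hM hMc).
exfalso.
set D := 2*alpha*x0 + (beta - beta^+q)*x0^+q - m in Dn0.
have u0 : eps / D != 0 by rewrite mulf_neq0 ?invr_neq0.
have G0 := aniso hF hq hnsq u0.
move: u0 G0; move Hu : (eps / D) => u u0 G0.
move: G0; move HG : (alpha * u * u - alpha ^+ q * (u ^+ q * u ^+ q) + (beta - beta ^+ q) * u * u ^+ q) => G G0.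
have hG : G^+q = -G by rewrite -HG; push hF hq he; ring.
have hs : (-(2*eps)/G)^+q = -(2*eps)/G.
  push hF hq he; rewrite hG invrN mulrN mulNr mulrN opprK; done.
move: hs; move Hs : (-(2*eps)/G) => s hs.
have s0 : s != 0 by rewrite -Hs mulf_neq0 ?invr_neq0 ?oppr_eq0 ?mulf_neq0.
have hDq : D^+q = 2*alpha^+q*x0^+q + (beta^+q - beta)*x0 - m^+q.
  rewrite /D; push hF hq he; ring.
have Dq0 : D^+q != 0 by rewrite expf_neq0.
have hu : u^+q = - eps / D^+q by rewrite -Hu; push hF hq he.
have h1 : u*(2*alpha*x0 + (beta - beta^+q)*x0^+q - m) = eps.
  rewrite -Hu -/D; field; by rewrite Dn0.
have h2 : u^+q*(2*alpha^+q*x0^+q + (beta^+q - beta)*x0 - m^+q) = - eps.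
  rewrite -hDq hu; field; by rewrite Dq0.
have h3 : s * (alpha * u * u - alpha ^+ q * (u ^+ q * u ^+ q) + (beta - beta ^+ q) * u * u ^+ q) = -(2*eps).
  rewrite HG -Hs; field; by rewrite G0.
have T := tangent_core h0 h1 h2 h3.
pose x1 := x0 + s * u.
pose r1 := m*x1 + eps - alpha*(x1*x1) - beta*(x1*x1^+q).
have cx1 : x1^+q = x0^+q + s * u^+q by rewrite /x1; push hF hq he; rewrite hs.
have hr1 : r1^+q = r1.
  rewrite /r1 /x1; push hF hq he; rewrite hs.
  apply: (ring_trick (esym T)); ring.
have e : pt (x1, alpha * x1 ^+ 2 + beta * x1 ^+ q.+1 + r1, 1) = pt (x0, y0, 1).
  apply: uniq; first exact: unital_aff.
  rewrite incidentE /dot /= /r1 hw3 expr2 exprS -Hm; apply/eqP; field; by rewrite w2n0.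
have [ex _] := pt_inj1 e.
move/eqP: ex; rewrite /x1 -subr_eq0 addrC addKr mulf_eq0 (negbTE s0) (negbTE u0).
done.
Qed.

Lemma ring_trickk (F : comPzRingType) (k a b c d : F) : c = d -> a - b = k * (c - d) -> a = b.
Proof. by move=> -> h; apply/eqP; rewrite -subr_eq0 h subrr mulr0. Qed.
Lemma lin_core (F : fieldType) (A Ac B Bc E a ac b bc c cc X Xc : F) :
  b != 0 -> bc != 0 ->
  A*X*X - Ac*(Xc*Xc) + (B - Bc)*X*Xc + 2*E = 0 ->
  a*X + b*((2*A*X + (B - Bc)*Xc)*X + E) + c = 0 ->
  ac*Xc + bc*((2*Ac*Xc + (Bc - B)*X)*Xc - E) + cc = 0 ->
  a*X/b - ac*Xc/bc = - c/b + cc/bc + 2*E.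
Proof.
move=> b0 bc0 hE hL hLc.
have e1 : a*X/b = -((2*A*X + (B - Bc)*Xc)*X + E) - c/b.
  have -> : a*X = -(b*((2*A*X + (B - Bc)*Xc)*X + E)) - c by apply: (ring_trick hL); ring.
  field; by rewrite b0.
have e2 : ac*Xc/bc = -((2*Ac*Xc + (Bc - B)*X)*Xc - E) - cc/bc.
  have -> : ac*Xc = -(bc*((2*Ac*Xc + (Bc - B)*X)*Xc - E)) - cc by apply: (ring_trick hLc); ring.
  field; by rewrite bc0.
rewrite e1 e2; apply: (ring_trickk (k := -2) hE); ring.
Qed.
Lemma pair_pts (q : nat) (F : finFieldType) (hF : #|F| = (q ^ 2)%N) (hq : odd q)
  (alpha beta eps : F) (he : eps ^+ q = - eps) (a b c u : F) (a0 : a != 0) (b0 : b != 0)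
  (hu : u = - b / a) (x x' : F) :
  alpha*x*x - alpha^+q*(x^+q*x^+q) + (beta - beta^+q)*x*x^+q + 2*eps = 0 ->
  a*x + b*((2*alpha*x + (beta - beta^+q)*x^+q)*x + eps) + c = 0 ->
  alpha*x'*x' - alpha^+q*(x'^+q*x'^+q) + (beta - beta^+q)*x'*x'^+q + 2*eps = 0 ->
  a*x' + b*((2*alpha*x' + (beta - beta^+q)*x'^+q)*x' + eps) + c = 0 ->
  exists w, x' = x + w * u /\
    w * (w * (alpha*u*u - alpha^+q*(u^+q*u^+q) + (beta - beta^+q)*u*u^+q)
         + ((2*alpha*x + (beta - beta^+q)*x^+q)*u - (2*alpha^+q*x^+q + (beta^+q - beta)*x)*u^+q)) = 0.
Proof.
move=> Ex Lx Ex' Lx'.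
have q0 : (0 : F) ^+ q = 0 by rewrite expr0n; case: (q) hq.
have aq0 : a^+q != 0 by rewrite expf_neq0.
have bq0 : b^+q != 0 by rewrite expf_neq0.
have conjL z : a*z + b*((2*alpha*z + (beta - beta^+q)*z^+q)*z + eps) + c = 0 ->
    a^+q*z^+q + b^+q*((2*alpha^+q*z^+q + (beta^+q - beta)*z)*z^+q - eps) + c^+q = 0.
  move=> Lz; have := congr1 (fun t => t ^+ q) Lz; rewrite q0 /=.
  push hF hq he => h; apply: (ring_trick h); ring.
have l1 := lin_core b0 bq0 Ex Lx (conjL _ Lx).
have l2 := lin_core b0 bq0 Ex' Lx' (conjL _ Lx').
have u0 : u != 0 by rewrite hu mulf_neq0 ?oppr_eq0 ?invr_neq0.
have huq : u^+q = - b^+q / a^+q by rewrite hu; push hF hq he.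
exists ((x' - x) / u); split; first by field.
have hw : ((x' - x) / u) ^+ q = (x' - x) / u.
  push hF hq he; rewrite huq hu.
  have d : a*(x'-x)/b = a^+q*(x'^+q - x^+q)/b^+q.
    apply: (ring_trick l2); apply: (ring_trickk (k := -1) l1); ring.
  have d' : x'^+q - x^+q = (a*(x'-x)/b) * b^+q / a^+q by rewrite d; field; rewrite ?aq0 ?bq0 ?a0 ?b0.
  rewrite d' !mulNr !invrN; field; by rewrite ?a0 ?b0 ?aq0 ?bq0.
move: hw; move Hw : ((x' - x) / u) => w hw.
have ex' : x' = x + w * u by rewrite -Hw; field.
have ex'q : x'^+q = x^+q + w * u^+q by rewrite ex'; push hF hq he; rewrite hw.
move: Ex'; rewrite ex'q ex' => Ex'.
apply: (ring_trick Ex'); apply: (ring_trickk (k := -1) Ex); ring.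
Qed.

Unset Implicit Arguments.

Theorem lemma2p4 (q : nat) (F : finFieldType) (hF : #|F| = (q ^ 2)%N) (hq : odd q)
  (alpha beta zeta : F) (ha : alpha != 0)
  (hnsq : ~ (exists y : F, y ^+ q = y /\
            y ^+ 2 = (beta ^+ q - beta) ^+ 2 + 4 * alpha ^+ q.+1))
  (hzeta : (q ^ 2).-1.-primitive_root zeta)
  (ell : {set vec F}) (hell : isPoint ell)
  (hU : ~~ incident (pt ((1, 0, 0) : vec F)) ell) :
  let eps := zeta ^+ (q.+1)./2 in
  (#|[set P in pedal q alpha beta (pt ((0%R, eps, 1%R) : vec F)) | incident P ell]| <= 2)%N.
Proof.
cbv zeta; set eps := zeta ^+ (q.+1)./2.
have [he e0 t0] := eps_props hF hq hzeta.
have [a [b [c [w0 eL]]]] := isPointP hell; subst ell.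
have a0 : a != 0.
  by move: hU; rewrite incidentE /dot /= mulr1 !mulr0 !addr0.
have key P : P \in [set P in pedal q alpha beta (pt ((0%R, eps, 1%R) : vec F)) | incident P (pt (a, b, c))] ->
  exists x, P = pt (x, (2 * alpha * x + (beta - beta ^+ q) * x ^+ q) * x + eps, 1) /\
    alpha * x * x - alpha ^+ q * (x ^+ q * x ^+ q) + (beta - beta ^+ q) * x * x ^+ q + 2 * eps = 0 /\
    a*x + b*((2*alpha*x + (beta - beta^+q)*x^+q)*x + eps) + c = 0.
  rewrite inE => /andP [hP hi].
  have [x [ex Ex]] := pedal_form hF hq hnsq he e0 t0 hP.
  exists x; split => //; split => //.
  by move: hi; rewrite ex incidentE /dot /= mulr1 => /eqP.
rewrite leqNgt; apply/negP => /card_gt2P [P1 [P2 [P3 [[h1 h2 h3] [n12 n23 n31]]]]].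
have [x1 [e1 [E1 L1]]] := key _ h1.
have [x2 [e2 [E2 L2]]] := key _ h2.
have [x3 [e3 [E3 L3]]] := key _ h3.
have eqP12 : x1 = x2 -> P1 = P2 by move=> ex; rewrite e1 e2 ex.
have eqP23 : x2 = x3 -> P2 = P3 by move=> ex; rewrite e2 e3 ex.
have eqP31 : x3 = x1 -> P3 = P1 by move=> ex; rewrite e3 e1 ex.
have [b0 | bn0] := eqVneq b 0.
  have xv x : a*x + b*((2*alpha*x + (beta - beta^+q)*x^+q)*x + eps) + c = 0 -> x = - c / a.
    rewrite b0 mul0r addr0 => h.
    have ax : a*x = -c by apply: (ring_trick h); ring.
    rewrite -ax; field; by rewrite a0.
  by move: n12; rewrite eqP12 ?eqxx // (xv _ L1) (xv _ L2).
move Hu : (- b / a) => u.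
have u0 : u != 0 by rewrite -Hu mulf_neq0 ?oppr_eq0 ?invr_neq0.
have G0 := aniso hF hq hnsq u0.
have [w2 [ex2 hw2]] := pair_pts hF hq he a0 bn0 (esym Hu) E1 L1 E2 L2.
have [w3 [ex3 hw3]] := pair_pts hF hq he a0 bn0 (esym Hu) E1 L1 E3 L3.
have [w20|w2n0] := eqVneq w2 0.
  by move: n12; rewrite eqP12 ?eqxx // ex2 w20 mul0r addr0.
have [w30|w3n0] := eqVneq w3 0.
  by move: n31; rewrite eqP31 ?eqxx // ex3 w30 mul0r addr0.
move/eqP: hw2; rewrite mulf_eq0 (negbTE w2n0) /= => /eqP hw2.
move/eqP: hw3; rewrite mulf_eq0 (negbTE w3n0) /= => /eqP hw3.
have w23 : w2 = w3.
  have : (w2 - w3) * (alpha * u * u - alpha ^+ q * (u ^+ q * u ^+ q) + (beta - beta ^+ q) * u * u ^+ q) = 0.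
    apply: (ring_trick hw2); apply: (ring_trickk (k := -1) hw3); ring.
  by move/eqP; rewrite mulf_eq0 (negbTE G0) orbF subr_eq0 => /eqP.
by move: n23; rewrite eqP23 ?eqxx // ex2 ex3 w23.
Qed.
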